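(* Let $D$ be a connected link diagram with at least one crossing. There are precisely two sign assignments $s_1$ and $s_2$ for $D$, and $s_1=-s_2$.
   Context: Let $D$ be an oriented link diagram in $S^2$. Its shadow gives a CW decomposition $X$ of $S^2$: $0$-cells are the crossings, $1$-cells are the arcs of $D$ between consecutive crossings (oriented by the link orientation, so each $1$-cell $e$ runs from $e(0)$ to $e(1)$), $2$-cells are the complementary regions. For $i\in\{0,1\}$ let $h(e,i)=1$ if $e$ is the upper strand at the crossing $e(i)$ and $h(e,i)=-1$ if it is the lower strand. Define $\beta(e)=-1$ if $h(e,0)=h(e,1)$ and $\beta(e)=1$ otherwise. A sign assignment is a function $s:X^0\to\{\pm1\}$ (from crossings to $\{\pm 1\}$) such that $s(e(0))s(e(1))=\beta(e)$ for every $1$-cell $e$. *)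

(* Defs.v *)
(* Combinatorial model of an oriented link diagram in S^2 as a
   4-valent map on the sphere with crossing information. *)
From mathcomp Require Import all_boot all_order all_algebra all_fingroup.
Set Implicit Arguments. Unset Strict Implicit. Unset Printing Implicit Defensive.
Import GRing.Theory.
Local Open Scope ring_scope.

(* V = crossings (0-cells), E = 1-cells (oriented arcs).
   A dart (half-edge) is a pair (e, i) : E * bool, standing for the end e(i)
   of e (i = false is e(0), the start; i = true is e(1), the end).
   [ends e i] = e(i) : V.
   [rot] = cyclic order (rotation) of the four darts around each crossing,
   given by the embedding in S^2.
   [h e i] = true iff e is the upper strand at e(i) (h(e,i) = 1). *)

Definition dvert (V E : finType) (ends : E -> bool -> V) (d : E * bool) : V :=
  ends d.1 d.2.

Definition dopp (E : finType) (d : E * bool) : E * bool := (d.1, ~~ d.2).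

Definition dh (E : finType) (h : E -> bool -> bool) (d : E * bool) : bool :=
  h d.1 d.2.

Definition face_step (E : finType) (rot : {perm E * bool}) (d : E * bool) :=
  rot (dopp d).

Definition is_oriented_diagram (V E : finType) (ends : E -> bool -> V)
    (rot : {perm E * bool}) (h : E -> bool -> bool) : Prop :=
  (forall d, dvert ends (rot d) = dvert ends d) /\
  (forall v : V, #|[set d | dvert ends d == v]| = 4%N) /\
  (forall d d', dvert ends d = dvert ends d' -> fconnect rot d d') /\
  (* the two strands through a crossing are the pairs of opposite darts
     {d, rot^2 d}; each strand enters and leaves (orientation) ... *)
  (forall d, (rot (rot d)).2 = ~~ d.2) /\
  (* ... is entirely upper or entirely lower ... *)
  (forall d, dh h (rot (rot d)) = dh h d) /\
  (* ... and one strand is upper, the other lower *)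
  (forall d, dh h (rot d) = ~~ dh h d) /\
  (* the map is drawn on the sphere S^2: Euler characteristic V - E + F = 2 *)
  (#|V| + fcard (face_step rot) predT = #|E| + 2)%N.

Definition diagram_connected (E : finType) (rot : {perm E * bool}) : Prop :=
  forall d d' : E * bool,
    connect (fun a b => (b == rot a) || (b == dopp a)) d d'.

Definition beta (E : finType) (h : E -> bool -> bool) (e : E) : int :=
  if h e false == h e true then -1 else 1.

Definition sign_assignment (V E : finType) (ends : E -> bool -> V)
    (h : E -> bool -> bool) (s : {ffun V -> int}) : Prop :=
  (forall v, s v = 1 \/ s v = -1) /\
  (forall e, s (ends e false) * s (ends e true) = beta h e).

(* Main.v *)
Require Import Defs.
From mathcomp Require Import all_boot all_order all_algebra all_fingroup.
From mathcomp Require Import zify.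
Set Implicit Arguments. Unset Strict Implicit. Unset Printing Implicit Defensive.
Import GRing.Theory.
Local Open Scope ring_scope.


Lemma F2_cases (x : 'F_2) : x = 0 \/ x = 1.
Proof. case: x => [[|[|]]] //= H; [left|right]; exact/val_inj. Qed.
Lemma F2_add_same (x : 'F_2) : x + x = 0.
Proof. by case: (F2_cases x) => ->; apply/val_inj. Qed.
Lemma F2_eq (x y : 'F_2) : x + y = 0 -> x = y.
Proof. by case: (F2_cases x) => ->; case: (F2_cases y) => -> // /(congr1 val). Qed.
Lemma F2_neg (b : bool) : ((~~ b)%:R : 'F_2) = 1 + b%:R.
Proof. by case: b; apply/val_inj. Qed.
Lemma F2_eqb (a b : bool) : ((a == b)%:R : 'F_2) = 1 + a%:R + b%:R.
Proof. by case: a; case: b; apply/val_inj. Qed.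

Lemma conn_inv (T : finType) (X : Type) (e : rel T) (f : T -> X) :
  (forall a b, e a b -> f a = f b) -> forall x y, connect e x y -> f x = f y.
Proof.
move=> H x y /connectP [p]; elim: p x => [|z p IH] x /=; first by move=> _ ->.
by case/andP=> exz pz ey; rewrite (H _ _ exz); exact: IH.
Qed.

Lemma rank_ker_const (F : fieldType) k n (A : 'M[F]_(k,n)) :
  (forall u : 'rV_k, u *m A = 0 -> exists c, u = const_mx c) -> (k <= (\rank A).+1)%N.
Proof.
move=> H.
have: (kermx A <= (const_mx 1 : 'rV[F]_k))%MS.
  apply/row_subP => i.
  have: row i (kermx A) *m A = 0 by rewrite -row_mul mulmx_ker row0.
  case/H => c ->.
  have -> : (const_mx c : 'rV[F]_k) = c *: const_mx 1.
    by apply/matrixP => a b; rewrite !mxE mulr1.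
  exact: scalemx_sub.
move/mxrankS; rewrite mxrank_ker => H2.
have H3 := rank_leq_row (const_mx 1 : 'rV[F]_k).
have: (k - \rank A <= 1)%N by apply: leq_trans H2 H3.
by rewrite leq_subLR addn1.
Qed.

Lemma sum_delta (F : nzRingType) n (x : 'I_n -> F) i0 :
  \sum_i x i * (i == i0)%:R = x i0.
Proof.
rewrite (bigD1 i0) //= eqxx mulr1 big1 ?addr0 // => i /negbTE ->.
by rewrite mulr0.
Qed.

Lemma fs_inj (E : finType) (rot : {perm E * bool}) : injective (face_step rot).
Proof.
move=> [a1 a2] [b1 b2] /perm_inj [-> /negb_inj ->] //.
Qed.

Lemma froot_fs (E : finType) (rot : {perm E * bool}) d :
  froot (face_step rot) (face_step rot d) = froot (face_step rot) d.
Proof.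
apply/esym/eqP; rewrite root_connect ?fconnect1 //.
exact: fconnect_sym (@fs_inj _ rot).
Qed.

Lemma face_reindex (F : nzRingType) (E : finType) (rot : {perm E * bool}) r
    (g : E * bool -> F) :
  \sum_(d | froot (face_step rot) d == r) g (face_step rot d) =
  \sum_(d | froot (face_step rot) d == r) g d.
Proof.
rewrite [RHS](reindex_inj (@fs_inj _ rot)); apply: eq_bigl => d.
by rewrite froot_fs.
Qed.

Lemma eq_enumv (T : finType) (t : T) (j : 'I_#|T|) : (t == enum_val j) = (j == enum_rank t).
Proof.
apply/eqP/eqP => [->|->]; [by rewrite enum_valK | by rewrite enum_rankK].
Qed.

Lemma sum_pair_delta (F : nzRingType) (E : finType) (q : E * bool -> F) x :
  \sum_(d : E * bool) (d.1 == x)%:R * q d = q (x, false) + q (x, true).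
Proof.
rewrite (eq_bigr (fun d => (d.1 == x)%:R * q (d.1, d.2))); last by case.
rewrite -(pair_bigA _ (fun e b => (e == x)%:R * q (e, b))) /= (bigD1 x) //= [X in _ + X]big1 => [|e ne]; last first.
  by rewrite big1 // => b _; rewrite (negbTE ne) mul0r.
by rewrite addr0 big_bool /= eqxx !mul1r addrC.
Qed.

Lemma sign_helper (sa sb : 'F_2) (b : bool) : (b%:R : 'F_2) = sa + sb ->
  (if sa == 0 then 1 else -1 : int) * (if sb == 0 then 1 else -1) = if b then -1 else 1.
Proof.
by case: (F2_cases sa) => ->; case: (F2_cases sb) => ->; case: b => // /(congr1 val).
Qed.

Lemma pm1_ratio (a b c d : int) : (a = 1 \/ a = -1) -> (b = 1 \/ b = -1) ->
  (c = 1 \/ c = -1) -> (d = 1 \/ d = -1) -> a * b = c * d -> a * c = b * d.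
Proof. by move=> [->|->] [->|->] [->|->] [->|->]. Qed.

Lemma pm1_eq (a c : int) : (a = 1 \/ a = -1) -> (c = 1 \/ c = -1) ->
  (a * c = 1 -> a = c) /\ (a * c = -1 -> a = - c).
Proof. by move=> [->|->] [->|->]. Qed.

Theorem proposition2p1 (V E : finType) (ends : E -> bool -> V)
    (rot : {perm E * bool}) (h : E -> bool -> bool) :
  is_oriented_diagram ends rot h ->
  diagram_connected rot ->
  (0 < #|V|)%N ->
  exists s1 s2 : {ffun V -> int},
    [/\ sign_assignment ends h s1, sign_assignment ends h s2, s1 != s2,
        (forall s, sign_assignment ends h s -> s = s1 \/ s = s2) &
        s1 = [ffun v => - s2 v]].
Proof.
move=> [Hrv [H4 [Hc [Hstr [Hhs [Hhr Heul]]]]]] Hcon HV.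
pose R := [set d | froot (face_step rot) d == d].
have HR : #|R| = fcard (face_step rot) predT.
  by apply: eq_card => d; rewrite !inE /= andbT.
have Hdart : forall v, exists d, dvert ends d = v.
  move=> v; have /card_gt0P [d] : (0 < #|[set d | dvert ends d == v]|)%N by rewrite H4.
  by rewrite inE => /eqP; exists d.
have HE : (#|E| * 2 = 4 * #|V|)%N.
  have <- : #|{: E * bool}| = (#|E| * 2)%N by rewrite card_prod card_bool.
  rewrite -sum1_card (partition_big (dvert ends) xpredT) //=.
  rewrite (eq_bigr (fun _ => 4%N)) => [|v _]; last first.
    by rewrite sum1_card -(H4 v); apply: eq_card => d; rewrite inE.
  by rewrite sum_nat_const cardT -cardE mulnC.
have HF : #|R| = (#|V| + 2)%N by move: Heul; rewrite -HR; lia.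
pose D : 'M['F_2]_(#|V|, #|E|) := \matrix_(i, j)
  ((ends (enum_val j) false == enum_val i)%:R + (ends (enum_val j) true == enum_val i)%:R).
pose Bm : 'M['F_2]_(#|R|, #|E|) := \matrix_(i, j)
  \sum_(d | froot (face_step rot) d == enum_val i) (d.1 == enum_val j)%:R.
pose bv : 'rV['F_2]_#|E| := \row_j (h (enum_val j) false == h (enum_val j) true)%:R.
have face_sum : forall (x : 'rV['F_2]_#|E|) i,
    (x *m Bm^T) 0 i = \sum_(d | froot (face_step rot) d == enum_val i) x 0 (enum_rank d.1).
  move=> x i; rewrite mxE.
  under eq_bigr => j _ do rewrite !mxE big_distrr /=.
  rewrite exchange_big /=; apply: eq_bigr => d _.
  rewrite -(sum_delta (fun j => x 0 j) (enum_rank d.1)); apply: eq_bigr => j _.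
  by rewrite (eq_enumv d.1 j).
have Dsum : forall (u : 'rV['F_2]_#|V|) j,
    (u *m D) 0 j = u 0 (enum_rank (ends (enum_val j) false)) + u 0 (enum_rank (ends (enum_val j) true)).
  move=> u j; rewrite mxE.
  under eq_bigr => i _ do rewrite !mxE mulrDr.
  rewrite big_split /= -!(sum_delta (fun i => u 0 i)); congr (_ + _); apply: eq_bigr => i _;
  by rewrite eq_enumv.
have face_zero : forall (g : E * bool -> 'F_2) r,
    \sum_(d | froot (face_step rot) d == r) (g d + g (face_step rot d)) = 0.
  by move=> g r; rewrite big_split /= face_reindex F2_add_same.
have DK : (D <= kermx Bm^T)%MS.
  apply/sub_kermxP; apply/matrixP => v i.
  have -> : (D *m Bm^T) v i = (row v D *m Bm^T) 0 i by rewrite -row_mul [RHS]mxE.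
  rewrite face_sum [RHS]mxE -[RHS](face_zero (fun d => (dvert ends d == enum_val v)%:R) (enum_val i)).
  apply: eq_bigr => [[e b]] _; rewrite !mxE enum_rankK /face_step Hrv /dvert /dopp /=.
  by case: b => //=; rewrite addrC.
have bK : (bv <= kermx Bm^T)%MS.
  apply/sub_kermxP; apply/rowP => i.
  rewrite face_sum [RHS]mxE -[RHS](face_zero (fun d => (dh h d)%:R) (enum_val i)).
  apply: eq_bigr => [[e b]] _; rewrite !mxE enum_rankK /face_step Hhr F2_neg F2_eqb /dh /dopp /=.
  case: b => /=; rewrite !addrA; last by rewrite (addrC 1).
  by rewrite -(addrC 1) -!addrA; congr (_ + _); rewrite addrC.
have [v0 _] : exists v0 : V, true by move/card_gt0P: HV => [v0 _]; exists v0.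
have [d0 Hd0] := Hdart v0.
have rD : (#|V| <= (\rank D).+1)%N.
  apply: rank_ker_const => u Hu.
  have He : forall e, u 0 (enum_rank (ends e false)) = u 0 (enum_rank (ends e true)).
    move=> e; apply: F2_eq.
    by have := congr1 (fun M : 'rV['F_2]_#|E| => M 0 (enum_rank e)) Hu; rewrite /= Dsum enum_rankK mxE.
  pose f d := u 0 (enum_rank (dvert ends d)).
  have Hf : forall d d', f d = f d'.
    move=> d d'; apply: (@conn_inv _ _ _ f _ d d' (Hcon d d')) => a b /orP [] /eqP ->.
      by rewrite /f Hrv.
    by case: a => e [] //; rewrite /f /dvert /=.
  exists (f d0); apply/rowP => i; rewrite mxE.
  have [d Hd] := Hdart (enum_val i).
  by rewrite -(Hf d) /f Hd enum_valK.
have rB : (#|R| <= (\rank Bm).+1)%N.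
  apply: rank_ker_const => u Hu.
  pose q d := \sum_i u 0 i * (froot (face_step rot) d == enum_val i)%:R.
  have Hq : forall j, (u *m Bm) 0 j = q (enum_val j, false) + q (enum_val j, true).
    move=> j; rewrite -sum_pair_delta mxE.
    under eq_bigr => i _ do rewrite mxE big_mkcond big_distrr /=.
    rewrite exchange_big /=; apply: eq_bigr => d _.
    rewrite /q big_distrr; apply: eq_bigr => i _.
    case: (froot (face_step rot) d == enum_val i) => /=.
      by rewrite mulr1 mulrC.
    by rewrite !mulr0.
  have He : forall e, q (e, false) = q (e, true).
    move=> e; apply: F2_eq.
    by have := congr1 (fun M : 'rV['F_2]_#|E| => M 0 (enum_rank e)) Hu; rewrite /= Hq enum_rankK mxE.
  have Hfs : forall d, q (face_step rot d) = q d by move=> d; rewrite /q froot_fs.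
  have Hf : forall d d', q d = q d'.
    move=> d d'; apply: (@conn_inv _ _ _ q _ d d' (Hcon d d')) => a b /orP [] /eqP ->.
      have -> : rot a = face_step rot (dopp a) by case: a => e b'; rewrite /face_step /dopp /= negbK.
      by rewrite Hfs; case: a => e [] /=; rewrite He.
    by case: a => e [] /=; rewrite He.
  exists (q d0); apply/rowP => i; rewrite mxE -(Hf (enum_val i)) /q.
  have /eqP -> : froot (face_step rot) (enum_val i) == enum_val i.
    by have := enum_valP i; rewrite inE.
  rewrite -[LHS](sum_delta (fun i => u 0 i) i); apply: eq_bigr => i' _.
  by rewrite (inj_eq enum_val_inj) eq_sym.
have rK : \rank (kermx Bm^T) = (#|E| - \rank Bm)%N by rewrite mxrank_ker mxrank_tr.
have KD : (kermx Bm^T <= D)%MS.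
  rewrite -(mxrank_leqif_sup DK).2; apply/eqP.
  have := mxrankS DK; lia.
have /submxP [s Hs] : (bv <= D)%MS := submx_trans bK KD.
have Hedge : forall e, ((h e false == h e true)%:R : 'F_2) =
    s 0 (enum_rank (ends e false)) + s 0 (enum_rank (ends e true)).
  move=> e; have := congr1 (fun M : 'rV['F_2]_#|E| => M 0 (enum_rank e)) Hs.
  by rewrite /= Dsum !mxE enum_rankK.
pose s1 : {ffun V -> int} := [ffun v => if s 0 (enum_rank v) == 0 then 1 else -1].
have [S1a S1b] : sign_assignment ends h s1.
  split => [v|e]; rewrite !ffunE; first by case: ifP; [left|right].
  by rewrite /beta; apply: sign_helper; rewrite Hedge.
pose s2 : {ffun V -> int} := [ffun v => - s1 v].
have s2E : forall v, s2 v = - s1 v by move=> v; rewrite ffunE.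
have S2 : sign_assignment ends h s2.
  split => [v|e]; rewrite !s2E; first by case: (S1a v) => ->; [right|left].
  by rewrite mulrNN S1b.
exists s1, s2; split => //.
- apply/eqP => /ffunP /(_ v0); rewrite s2E.
  by case: (S1a v0) => ->.
- move=> t [Ta Tb].
  pose qv v := t v * s1 v.
  have Hq : forall d d', qv (dvert ends d) = qv (dvert ends d').
    move=> d d'; apply: (@conn_inv _ _ _ (fun d => qv (dvert ends d)) _ d d' (Hcon d d')).
    move=> a b /orP [] /eqP ->; first by rewrite Hrv.
    case: a => e b'.
    have H := pm1_ratio (Ta _) (Ta _) (S1a _) (S1a _) (etrans (Tb e) (esym (S1b e))).
    by rewrite /qv /dvert /=; case: b' => /=.
  have Hqv : forall v, qv v = qv v0.
    by move=> v; have [d Hd] := Hdart v; rewrite -Hd -Hd0; apply: Hq.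
  have Hcq : qv v0 = 1 \/ qv v0 = -1.
    by rewrite /qv; move: (Ta v0) (S1a v0) => [->|->] [->|->]; [left|right|right|left].
  case: Hcq => Hcq; [left|right]; apply/ffunP => v; rewrite ?s2E.
    by apply: (pm1_eq (Ta v) (S1a v)).1; rewrite -/(qv v) Hqv.
  by apply: (pm1_eq (Ta v) (S1a v)).2; rewrite -/(qv v) Hqv.
- by apply/ffunP => v; rewrite [RHS]ffunE s2E opprK.
Qed.
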